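(* Let $I$ be a fuzzy implication function, $T$ a t-norm and $j\in\{1,\dots,n_c\}$. If $I$ satisfies the monotonicity of the generalized modus ponens with respect to $T$, i.e. $T(\tilde x,I(\tilde x,y))\le T(x,I(x,y))$ for all $x,\tilde x,y\in[0,1]$ with $\tilde x\le x$, then $FSupp(R^{S,L}_j)\ge FSupp(R^{\tilde S,\tilde L}_j)$ for all $R^{S,L}_j,R^{\tilde S,\tilde L}_j\in\mathcal{R}^{I,T}$ such that $R^{S,L}_j\prec R^{\tilde S,\tilde L}_j$.
   Context: A fuzzy implication function is a map $I:[0,1]^2\to[0,1]$ decreasing in the first variable, increasing in the second, with $I(0,0)=I(1,1)=1$, $I(1,0)=0$. A t-norm is a commutative, associative, increasing binary operation on $[0,1]$ with neutral element $1$. Setting: features $X_1,\dots,X_{n_f}$ with domains $D_m\subseteq\mathbb{R}$, target $Y$ with domain $D_Y$; examples $E=\{E^d=(e^d_1,\dots,e^d_{n_f},y^d):d=1,\dots,n_e\}$; each feature $X_m$ has labels $LL_m^1,\dots,LL_m^{l_m}$ with membership functions $\mu_{LL_m^n}:D_m\to[0,1]$; classes $\mathrm{Class}_1,\dots,\mathrm{Class}_{n_c}$ with $\mu_{\mathrm{Class}_j}:D_Y\to[0,1]$. A rule $R^{S,L}_j$ is given by a class index $j$, a set of features $S=\{X_{m_1},\dots,X_{m_s}\}$ and a set $L$ with exactly one label $LL^{n_{m_i}}_{m_i}$ per feature in $S$; $\mathcal{R}^{I,T}$ is the set of all such rules. For an example $E^d$: $\mu_{ant}^{R^{S,L}_j,E^d}=T(\mu_{LL^{n_{m_1}}_{m_1}}(e^d_{m_1}),\dots,\mu_{LL^{n_{m_s}}_{m_s}}(e^d_{m_s}))$,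 $\mu_{con}^{R^{S,L}_j,E^d}=\mu_{\mathrm{Class}_j}(y^d)$, $\mu_{eval}^{R^{S,L}_j,E^d}=T\big(\mu_{ant}^{R^{S,L}_j,E^d},I(\mu_{ant}^{R^{S,L}_j,E^d},\mu_{con}^{R^{S,L}_j,E^d})\big)$. The fuzzy support is $FSupp(R^{S,L}_j)=\frac{1}{|E|}\sum_{d=1}^{n_e}\mu_{eval}^{R^{S,L}_j,E^d}$. $R^{\tilde S,\tilde L}_{\tilde j}$ is a refinement of $R^{S,L}_j$, written $R^{S,L}_j\prec R^{\tilde S,\tilde L}_{\tilde j}$, iff $\tilde j=j$, $S\subsetneq\tilde S$, and every label of $L$ belongs to $\tilde L$. *)

(* Defs.v *)
From mathcomp Require Import all_boot all_order all_algebra.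
Set Implicit Arguments. Unset Strict Implicit. Unset Printing Implicit Defensive.
Import Order.TTheory GRing.Theory Num.Theory.
Local Open Scope ring_scope.

Section FuzzyDefs.
Variable R : realFieldType.

Definition in01 (x : R) : Prop := 0 <= x <= 1.

Definition is_tnorm (T : R -> R -> R) : Prop :=
  [/\ (forall x y, in01 x -> in01 y -> in01 (T x y)),
      (forall x y, in01 x -> in01 y -> T x y = T y x),
      (forall x y z, in01 x -> in01 y -> in01 z -> T x (T y z) = T (T x y) z),
      (forall x x' y y', in01 x -> in01 x' -> in01 y -> in01 y' ->
          x <= x' -> y <= y' -> T x y <= T x' y') &
      (forall x, in01 x -> T x 1 = x)].

Definition is_fuzzy_implication (I : R -> R -> R) : Prop :=
  [/\ (forall x y, in01 x -> in01 y -> in01 (I x y)),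
      (forall x x' y, in01 x -> in01 x' -> in01 y -> x <= x' -> I x' y <= I x y),
      (forall x y y', in01 x -> in01 y -> in01 y' -> y <= y' -> I x y <= I x y')
      & [/\ I 0 0 = 1, I 1 1 = 1 & I 1 0 = 0]].

Definition GMP_monotone (I T : R -> R -> R) : Prop :=
  forall x xt y, in01 x -> in01 xt -> in01 y -> xt <= x ->
    T xt (I xt y) <= T x (I x y).

Variables (nf : nat) (l : 'I_nf -> nat).

(* a label LL_m^n is encoded as the dependent pair (m, n) *)
Definition label := {m : 'I_nf & 'I_(l m)}.

Definition rule_wf (S : {set 'I_nf}) (L : {set label}) : Prop :=
  (forall p, p \in L -> tag p \in S) /\
  (forall m, m \in S -> #|[set p in L | tag p == m]| = 1%N).

Variable mu : forall m : 'I_nf, 'I_(l m) -> R -> R.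

(* n-ary t-norm of the label memberships (T is commutative/associative with
   neutral element 1, so the fold order is immaterial) *)
Definition mu_ant (T : R -> R -> R) (L : {set label}) (e : 'I_nf -> R) : R :=
  foldr (fun p acc => T (mu (tagged p) (e (tag p))) acc) 1 (enum L).

Definition mu_eval (I T : R -> R -> R) (L : {set label}) (e : 'I_nf -> R)
    (con : R) : R :=
  T (mu_ant T L e) (I (mu_ant T L e) con).

Variables (ne nc : nat) (ex : 'I_ne -> 'I_nf -> R) (ey : 'I_ne -> R)
  (muC : 'I_nc -> R -> R).

(* fuzzy support of the rule R_j^{S,L} (S is determined by L) *)
Definition FSupp (I T : R -> R -> R) (j : 'I_nc) (L : {set label}) : R :=
  (ne%:R)^-1 * \sum_(d < ne) mu_eval I T L (ex d) (muC j (ey d)).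

Definition refines (S : {set 'I_nf}) (L : {set label})
    (S' : {set 'I_nf}) (L' : {set label}) : Prop :=
  S \proper S' /\ L \subset L'.

End FuzzyDefs.

(* Main.v *)
Require Import Defs.
From mathcomp Require Import all_boot all_order all_algebra.
Import Order.TTheory GRing.Theory Num.Theory.
Local Open Scope ring_scope.

Section Aux.
Variable R : realFieldType.
Variable T : R -> R -> R.
Hypothesis hT : is_tnorm T.

Lemma fold01 (X : Type) (g : X -> R) (s : seq X) :
  (forall x, in01 (g x)) -> in01 (foldr (fun p acc => T (g p) acc) 1 s).
Proof.
case: hT => h01 _ _ _ _ hg; elim: s => [|x s IH] /=.
  by rewrite /in01; apply/andP; split; [exact: ler01 | exact: lexx].
exact: h01.
Qed.

Lemma fold_filter (X : Type) (g : X -> R) (P : pred X) (s : seq X) :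
  (forall x, in01 (g x)) ->
  foldr (fun p acc => T (g p) acc) 1 s <=
  foldr (fun p acc => T (g p) acc) 1 (filter P s).
Proof.
move=> hg; have H1 : in01 (1 : R) by (rewrite /in01; apply/andP; split; [exact: ler01 | exact: lexx]).
case: hT => h01 hC _ hM h1.
elim: s => [|x s IH] /=; first by [].
have Fs := @fold01 X g s hg; have Ff := @fold01 X g (filter P s) hg.
case: (P x) => /=.
  apply: hM; [exact: hg|exact: hg|exact: Fs|exact: Ff|exact: lexx|exact: IH].
apply: le_trans IH.
set F := foldr _ 1 s.
apply: (@le_trans _ _ (T 1 F)).
  apply: hM; [exact: hg|exact: H1|exact: Fs|exact: Fs|by case/andP: (hg x)|exact: lexx].
by rewrite hC ?h1 //; exact: le_refl.
Qed.
End Aux.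

Theorem proposition8 (R : realFieldType) (nf : nat) (D : 'I_nf -> pred R)
  (l : 'I_nf -> nat) (mu : forall m : 'I_nf, 'I_(l m) -> R -> R)
  (nc : nat) (DY : pred R) (muC : 'I_nc -> R -> R)
  (ne : nat) (ex : 'I_ne -> 'I_nf -> R) (ey : 'I_ne -> R)
  (I T : R -> R -> R) (j : 'I_nc) :
  (forall m (n : 'I_(l m)) x, D m x -> in01 (mu m n x)) ->
  (forall c x, DY x -> in01 (muC c x)) ->
  (forall d m, D m (ex d m)) ->
  (forall d, DY (ey d)) ->
  is_fuzzy_implication I -> is_tnorm T ->
  GMP_monotone I T ->
  forall (S St : {set 'I_nf}) (L Lt : {set label l}),
    rule_wf S L -> rule_wf St Lt ->
    refines S L St Lt ->
    FSupp mu ex ey muC I T j Lt <= FSupp mu ex ey muC I T j L.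
Proof.
move=> hmu hmuC hex hey hI hT hG S St L Lt _ _ [_ sub].
rewrite /FSupp; apply: ler_wpM2l; first by rewrite invr_ge0 ler0n.
apply: ler_sum => d _; rewrite /mu_eval.
have hg : forall p : label l, in01 (mu (tag p) (tagged p) (ex d (tag p))).
  by move=> p; exact: (hmu _ (tagged p) _ (hex d (tag p))).
have eL : enum L = filter (mem L) (enum Lt).
  rewrite /enum_mem -filter_predI; apply: eq_filter => x /=.
  by case xL: (x \in L) => //=; rewrite (subsetP sub).
apply: hG.
- exact: fold01.
- exact: fold01.
- by apply: hmuC.
by rewrite /mu_ant eL; apply: fold_filter.
Qed.
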